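(* In the setting described in the context, for each $t\in(0,T_{max})$ and any $r\in(0,R)$ we have \[ -\frac{\mu R^n}{n}\,r^{1-n}\le v_r(r,t)\le\frac{\mu}{n}\,r,\qquad |v_r(r,t)|\le\frac{\|u(\cdot,t)\|_{L^\infty((0,R))}}{n}\,r,\qquad |v_{rr}(r,t)|\le\|u(\cdot,t)\|_{L^\infty((0,R))}. \]
   Context: Let $n\ge1$, $R>0$, $\Omega=B_R(0)\subset\mathbb{R}^n$, $\chi>0$, and let $u_0\in C^3(\bar\Omega)$ be radially symmetric and positive in $\bar\Omega$ with $\partial u_0/\partial\nu=0$ on $\partial\Omega$; let $\mu:=\frac{1}{|\Omega|}\int_\Omega u_0$. Let $T_{max}\in(0,\infty]$ and $(u,v)$ denote the maximally extended classical solution of the problem $u_t=\nabla\cdot\big(\frac{u\nabla u}{\sqrt{u^2+|\nabla u|^2}}\big)-\chi\nabla\cdot\big(\frac{u\nabla v}{\sqrt{1+|\nabla v|^2}}\big)$, $0=\Delta v-\mu+u$ in $\Omega\times(0,T_{max})$, $\big(\frac{u\nabla u}{\sqrt{u^2+|\nabla u|^2}}-\chi\frac{u\nabla v}{\sqrt{1+|\nabla v|^2}}\big)\cdot\nu=0$ on $\partial\Omega$, $u(\cdot,0)=u_0$; that is, $u\in C^{2,1}(\bar\Omega\times[0,T_{max}))$ and $v\in C^{2,0}(\bar\Omega\times[0,T_{max}))$ are the uniquely determined positive radially symmetric functions solving this problem classically, and $T_{max}$ is the maximal time of existence of this classical solution. By radial symmetry we write $u(r,t)$, $v(r,t)$ with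 $r=|x|\in(0,R)$, and subscripts $r$ denote radial derivatives. *)

(* Defs.v *)
From Stdlib Require Import Reals Lra.
From Coquelicot Require Import Coquelicot.
Open Scope R_scope.

(* Radially symmetric functions on B_R(0) x time are represented by their
   profiles f : R -> R -> R, f r t, extended evenly in r to [-R,R]. *)

Definition d_r (f : R -> R -> R) : R -> R -> R :=
  fun r t => Derive (fun s => f s t) r.
Definition d_t (f : R -> R -> R) : R -> R -> R :=
  fun r t => Derive (fun s => f r s) t.

Definition Qcl (Rr : R) (Tmax : Rbar) (p : R * R) : Prop :=
  - Rr <= fst p <= Rr /\ 0 <= snd p /\ Rbar_lt (snd p) Tmax.
Definition Qpos (Rr : R) (Tmax : Rbar) (p : R * R) : Prop :=
  - Rr <= fst p <= Rr /\ 0 < snd p /\ Rbar_lt (snd p) Tmax.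

Definition cont_on (D : R * R -> Prop) (f : R -> R -> R) : Prop :=
  forall p, D p ->
    filterlim (fun q : R * R => f (fst q) (snd q)) (within D (locally p))
              (locally (f (fst p) (snd p))).

Definition C21 (Rr : R) (Tmax : Rbar) (u : R -> R -> R) : Prop :=
  (forall r t, Qcl Rr Tmax (r, t) ->
     ex_derive (fun s => u s t) r /\ ex_derive (fun s => d_r u s t) r) /\
  cont_on (Qcl Rr Tmax) u /\ cont_on (Qcl Rr Tmax) (d_r u) /\
  cont_on (Qcl Rr Tmax) (d_r (d_r u)) /\
  (forall r t, Qpos Rr Tmax (r, t) -> ex_derive (fun s => u r s) t) /\
  cont_on (Qpos Rr Tmax) (d_t u).

Definition C20 (Rr : R) (Tmax : Rbar) (v : R -> R -> R) : Prop :=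
  (forall r t, Qcl Rr Tmax (r, t) ->
     ex_derive (fun s => v s t) r /\ ex_derive (fun s => d_r v s t) r) /\
  cont_on (Qcl Rr Tmax) v /\ cont_on (Qcl Rr Tmax) (d_r v) /\
  cont_on (Qcl Rr Tmax) (d_r (d_r v)).

(* radial component of the total flux
   u grad u / sqrt(u^2+|grad u|^2) - chi u grad v / sqrt(1+|grad v|^2) *)
Definition flux (chi : R) (u v : R -> R -> R) (r t : R) : R :=
  u r t * d_r u r t / sqrt (u r t ^ 2 + d_r u r t ^ 2)
  - chi * u r t * d_r v r t / sqrt (1 + d_r v r t ^ 2).

(* mean value of the radial function u0 over B_R(0) in R^n:
   mu = (1/|B_R|) int_{B_R} u0 = n R^{-n} int_0^R r^{n-1} u0(r) dr *)
Definition mean_radial (n : nat) (Rr : R) (u0 : R -> R) : R :=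
  INR n / Rr ^ n * RInt (fun r => r ^ (n - 1) * u0 r) 0 Rr.

Definition C3_on (Rr : R) (u0 : R -> R) : Prop :=
  (forall k r, (k <= 2)%nat -> - Rr <= r <= Rr -> ex_derive (Derive_n u0 k) r) /\
  (forall r, - Rr <= r <= Rr -> continuous (Derive_n u0 3) r).

Definition radial_classical_solution (n : nat) (Rr chi : R) (u0 : R -> R)
    (Tmax : Rbar) (u v : R -> R -> R) : Prop :=
  let mu := mean_radial n Rr u0 in
  (forall r t, u (- r) t = u r t /\ v (- r) t = v r t) /\
  C21 Rr Tmax u /\ C20 Rr Tmax v /\
  (forall r t, Qcl Rr Tmax (r, t) -> 0 < u r t /\ 0 < v r t) /\
  (* first equation, in divergence form: u_t = r^{1-n} (r^{n-1} F)_r *)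
  (forall r t, 0 < r < Rr -> 0 < t -> Rbar_lt t Tmax ->
     is_derive (fun s => s ^ (n - 1) * flux chi u v s t) r
               (r ^ (n - 1) * d_t u r t)) /\
  (forall r t, 0 < r < Rr -> 0 < t -> Rbar_lt t Tmax ->
     0 = d_r (d_r v) r t + INR (n - 1) / r * d_r v r t - mu + u r t) /\
  (forall t, 0 < t -> Rbar_lt t Tmax -> flux chi u v Rr t = 0) /\
  (forall r, - Rr <= r <= Rr -> u r 0 = u0 r).

Definition Linf_norm (Rr : R) (f : R -> R) : Rbar :=
  Lub_Rbar (fun y => exists r, 0 < r < Rr /\ y = Rabs (f r)).

(* Main.v *)
Require Import Defs.
From Stdlib Require Import Reals Lra Lia.
From Coquelicot Require Import Coquelicot.
Open Scope R_scope.

Definition cs (Rr s : R) : R := Rmax (- Rr) (Rmin s Rr).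

Lemma cs_lip Rr a b : 0 <= Rr -> Rabs (cs Rr a - cs Rr b) <= Rabs (a - b).
Proof.
  intros. unfold cs, Rmax, Rmin.
  repeat destruct Rle_dec; unfold Rabs; repeat destruct Rcase_abs; lra.
Qed.

Lemma cs_id Rr s : - Rr <= s <= Rr -> cs Rr s = s.
Proof. intros. unfold cs, Rmax, Rmin. repeat destruct Rle_dec; lra. Qed.

Lemma cs_in Rr s : 0 <= Rr -> - Rr <= cs Rr s <= Rr.
Proof. intros. unfold cs, Rmax, Rmin. repeat destruct Rle_dec; lra. Qed.

Lemma rmax_lip a b : Rabs (Rmax 0 a - Rmax 0 b) <= Rabs (a - b).
Proof. unfold Rmax. repeat destruct Rle_dec; unfold Rabs; repeat destruct Rcase_abs; lra. Qed.

Lemma cont_on_eps D f p : cont_on D f -> D p -> forall eps, 0 < eps ->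
  exists delta, 0 < delta /\ forall q, D q -> Rabs (fst q - fst p) < delta ->
   Rabs (snd q - snd p) < delta -> Rabs (f (fst q) (snd q) - f (fst p) (snd p)) < eps.
Proof.
  intros Hc Dp eps He.
  specialize (Hc p Dp (ball (f (fst p) (snd p)) (mkposreal eps He))
    (locally_ball _ _)).
  destruct Hc as [d Hd].
  exists d. split. apply cond_pos.
  intros q Dq H1 H2. apply (Hd q). split; [exact H1|exact H2]. exact Dq.
Qed.

Lemma bridge D f (g : R -> R -> R) x y (al be : R -> R -> R) (d0 : posreal) :
  cont_on D f ->
  (forall a b, Rabs (a - x) < d0 -> Rabs (b - y) < d0 ->
     D (al a b, be a b) /\ g a b = f (al a b) (be a b)) ->
  (forall a b, Rabs (al a b - al x y) <= Rabs (a - x) + Rabs (b - y)) ->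
  (forall a b, Rabs (be a b - be x y) <= Rabs (a - x) + Rabs (b - y)) ->
  continuity_2d_pt g x y.
Proof.
  intros Hc Hg Ha Hb eps.
  assert (Hx : Rabs (x - x) < d0) by (rewrite Rminus_diag, Rabs_R0; apply cond_pos).
  assert (Hy : Rabs (y - y) < d0) by (rewrite Rminus_diag, Rabs_R0; apply cond_pos).
  destruct (Hg x y Hx Hy) as [D0 E0].
  destruct (cont_on_eps D f _ Hc D0 eps (cond_pos eps)) as [d [Hd Hq]].
  assert (Hm : 0 < Rmin d0 (d/2)).
  { apply Rmin_pos. apply cond_pos. lra. }
  exists (mkposreal _ Hm). simpl. intros a b H1 H2.
  pose proof (Rmin_l d0 (d/2)). pose proof (Rmin_r d0 (d/2)).
  destruct (Hg a b) as [Da Ea]; try lra.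
  rewrite Ea, E0.
  apply (Hq (al a b, be a b) Da); simpl.
  - specialize (Ha a b). lra.
  - specialize (Hb a b). lra.
Qed.

Lemma slice1 g x y : continuity_2d_pt g x y -> continuity_pt (fun a => g a y) x.
Proof.
  intros H. apply continuity_pt_locally. intros eps.
  destruct (H eps) as [d Hd]. exists d. intros a Ha.
  apply Hd. exact Ha. rewrite Rminus_diag, Rabs_R0. apply cond_pos.
Qed.

Lemma slice2 g x y : continuity_2d_pt g x y -> continuity_pt (fun b => g x b) y.
Proof.
  intros H. apply continuity_pt_locally. intros eps.
  destruct (H eps) as [d Hd]. exists d. intros a Ha.
  apply Hd. rewrite Rminus_diag, Rabs_R0. apply cond_pos. exact Ha.
Qed.

Lemma cpt_of_derive f x l : is_derive f x l -> continuity_pt f x.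
Proof.
  intros H. apply continuity_pt_filterlim. apply (ex_derive_continuous (K:=R_AbsRing) (V:=R_NormedModule)). exists l. exact H.
Qed.

Lemma cpt_pow k x : continuity_pt (fun y => y ^ k) x.
Proof.
  apply (cpt_of_derive _ _ _ (is_derive_pow (fun y => y) k x 1 (is_derive_id x))).
Qed.

Lemma even_deriv0 f : (forall x, f (- x) = f x) -> ex_derive f 0 -> Derive f 0 = 0.
Proof.
  intros He [l Hl].
  assert (H2 : is_derive (fun x => f (- x)) 0 (scal (-1) l)).
  { assert (Hl' : is_derive f (- 0) l) by (rewrite Ropp_0; exact Hl).
    assert (Ho : is_derive (fun x : R => - x) 0 (-1)).
    { auto_derive; [easy|ring]. }
    exact (is_derive_comp f (fun x => - x) 0 l (-1) Hl' Ho). }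
  apply is_derive_ext with (g := f) in H2; [|intros; apply He].
  rewrite (is_derive_unique _ _ _ Hl).
  pose proof (is_derive_unique _ _ _ Hl) as U1.
  pose proof (is_derive_unique _ _ _ H2) as U2.
  rewrite U1 in U2. unfold scal in U2; simpl in U2; unfold mult in U2; simpl in U2. lra.
Qed.

Lemma ftc_open (G g : R -> R) a b : a <= b ->
  (forall x, a < x < b -> is_derive G x (g x)) ->
  (forall x, a <= x <= b -> continuity_pt G x) ->
  (forall x, continuity_pt g x) ->
  RInt g a b = G b - G a.
Proof.
  intros Hab HG HGc Hgc.
  assert (HI : forall y, is_derive (fun y => RInt g a y) y (g y)).
  { intros y. apply (is_derive_RInt g (fun y => RInt g a y) a y).
    - apply filter_forall. intros b0. apply (RInt_correct (V:=R_CompleteNormedModule)).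
      apply (ex_RInt_continuous (V:=R_CompleteNormedModule)). intros z _. apply continuity_pt_filterlim. apply Hgc.
    - apply continuity_pt_filterlim. apply Hgc. }
  destruct (MVT_gen (fun y => RInt g a y - G y) a b (fun _ => 0)) as [c [_ Hc]].
  - intros x Hx. rewrite Rmin_left in Hx by lra. rewrite Rmax_right in Hx by lra.
    pose proof (is_derive_minus _ _ x _ _ (HI x) (HG x Hx)) as Hm.
    unfold minus, plus, opp in Hm; simpl in Hm.
    replace 0 with (g x + - g x) by ring. exact Hm.
  - intros x Hx. rewrite Rmin_left in Hx by lra. rewrite Rmax_right in Hx by lra.
    apply continuity_pt_minus. apply (cpt_of_derive _ _ _ (HI x)). apply HGc; lra.
  - rewrite RInt_point in Hc. unfold zero in Hc; simpl in Hc. lra.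
Qed.

Lemma rbar_nbhd (x : R) (Tmax : Rbar) : Rbar_lt x Tmax ->
  exists d0 : posreal, forall a, a < x + d0 -> Rbar_lt a Tmax.
Proof.
  destruct Tmax as [T| |]; intros H; simpl in H.
  - assert (Hp : 0 < T - x) by lra. exists (mkposreal _ Hp). simpl. intros; simpl; lra.
  - exists (mkposreal 1 Rlt_0_1). simpl; auto.
  - contradiction.
Qed.

Lemma cont2_clamp (Rr : R) (Tmax : Rbar) (F : R -> R -> R) (tau s : R) : 0 <= Rr -> Rbar_lt 0 Tmax -> Rbar_lt tau Tmax ->
  cont_on (Qcl Rr Tmax) F ->
  continuity_2d_pt (fun a b => F (cs Rr b) (Rmax 0 a)) tau s.
Proof.
  intros HR H0 Ht Hc.
  assert (Hm : Rbar_lt (Rmax 0 tau) Tmax).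
  { unfold Rmax; destruct Rle_dec; auto. }
  destruct (rbar_nbhd _ _ Hm) as [d0 Hd0].
  apply (bridge (Qcl Rr Tmax) F _ tau s (fun a b => cs Rr b) (fun a b => Rmax 0 a) d0 Hc).
  - intros a b Ha Hb. split; [|reflexivity].
    unfold Qcl; simpl. split. apply cs_in; auto. split. apply Rmax_l.
    apply Hd0. pose proof (rmax_lip a tau). pose proof (Rle_abs (Rmax 0 a - Rmax 0 tau)). lra.
  - intros a b. pose proof (cs_lip Rr b s HR). pose proof (Rabs_pos (a - tau)). lra.
  - intros a b. pose proof (rmax_lip a tau). pose proof (Rabs_pos (b - s)). lra.
Qed.

Lemma cont2_pos (Rr : R) (Tmax : Rbar) (F : R -> R -> R) (tau s : R) : 0 <= Rr -> 0 < tau -> Rbar_lt tau Tmax ->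
  cont_on (Qpos Rr Tmax) F ->
  continuity_2d_pt (fun a b => F (cs Rr b) a) tau s.
Proof.
  intros HR H0 Ht Hc.
  destruct (rbar_nbhd _ _ Ht) as [d1 Hd1].
  assert (Hp : 0 < Rmin d1 tau) by (apply Rmin_pos; [apply cond_pos|lra]).
  apply (bridge (Qpos Rr Tmax) F _ tau s (fun a b => cs Rr b) (fun a b => a) (mkposreal _ Hp) Hc).
  - intros a b Ha Hb. simpl in Ha. split; [|reflexivity].
    pose proof (Rmin_l d1 tau). pose proof (Rmin_r d1 tau).
    pose proof (Rle_abs (a - tau)). pose proof (Rle_abs (-(a - tau))). rewrite Rabs_Ropp in H3.
    unfold Qpos; simpl. split. apply cs_in; auto. split. lra.
    apply Hd1. lra.
  - intros a b. pose proof (cs_lip Rr b s HR). pose proof (Rabs_pos (a - tau)). lra.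
  - intros a b. pose proof (Rabs_pos (b - s)). lra.
Qed.

Lemma loc_pos_T (x : R) (Tmax : Rbar) : 0 < x -> Rbar_lt x Tmax ->
  locally x (fun y => 0 < y /\ Rbar_lt y Tmax).
Proof.
  intros Hx Ht. destruct (rbar_nbhd _ _ Ht) as [d1 Hd1].
  assert (Hp : 0 < Rmin d1 x) by (apply Rmin_pos; [apply cond_pos|lra]).
  exists (mkposreal _ Hp). intros y Hy.
  change (Rabs (y - x) < Rmin d1 x) in Hy.
  pose proof (Rmin_l d1 x). pose proof (Rmin_r d1 x).
  pose proof (Rle_abs (y - x)). pose proof (Rle_abs (-(y - x))). rewrite Rabs_Ropp in H2.
  split. lra. apply Hd1. lra.
Qed.

Lemma loc_in (Rr x : R) : - Rr < x < Rr -> locally x (fun y => - Rr < y < Rr).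
Proof.
  intros Hx.
  assert (Hp : 0 < Rmin (x + Rr) (Rr - x)) by (apply Rmin_pos; lra).
  exists (mkposreal _ Hp). intros y Hy.
  change (Rabs (y - x) < Rmin (x + Rr) (Rr - x)) in Hy.
  pose proof (Rmin_l (x + Rr) (Rr - x)). pose proof (Rmin_r (x + Rr) (Rr - x)).
  pose proof (Rle_abs (y - x)). pose proof (Rle_abs (-(y - x))). rewrite Rabs_Ropp in H2.
  lra.
Qed.

Lemma cont_flux chi U DU DV x y :
  continuity_2d_pt U x y -> continuity_2d_pt DU x y -> continuity_2d_pt DV x y ->
  0 < U x y ->
  continuity_2d_pt (fun a b => U a b * DU a b / sqrt (U a b ^ 2 + DU a b ^ 2)
     - chi * U a b * DV a b / sqrt (1 + DV a b ^ 2)) x y.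
Proof.
  intros HU HD HV Hp.
  assert (Hsq : forall F, continuity_2d_pt F x y -> continuity_2d_pt (fun a b => F a b ^ 2) x y).
  { intros F HF. apply (continuity_1d_2d_pt_comp (fun z => z ^ 2) F). apply cpt_pow. exact HF. }
  apply continuity_2d_pt_minus.
  - apply continuity_2d_pt_mult. apply continuity_2d_pt_mult; assumption.
    apply continuity_2d_pt_inv.
    + apply (continuity_1d_2d_pt_comp sqrt (fun a b => U a b ^ 2 + DU a b ^ 2)).
      apply continuity_pt_sqrt. nra.
      apply continuity_2d_pt_plus; apply Hsq; assumption.
    + apply Rgt_not_eq. apply sqrt_lt_R0. nra.
  - apply continuity_2d_pt_mult. apply continuity_2d_pt_mult.
    apply continuity_2d_pt_mult. apply continuity_2d_pt_const. assumption. assumption.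
    apply continuity_2d_pt_inv.
    + apply (continuity_1d_2d_pt_comp sqrt (fun a b => 1 + DV a b ^ 2)).
      apply continuity_pt_sqrt. nra.
      apply continuity_2d_pt_plus. apply continuity_2d_pt_const. apply Hsq; assumption.
    + apply Rgt_not_eq. apply sqrt_lt_R0. nra.
Qed.

Lemma cont2_powmul k (F : R -> R -> R) x y : continuity_2d_pt F x y ->
  continuity_2d_pt (fun a b => b ^ k * F a b) x y.
Proof.
  intros H. apply continuity_2d_pt_mult; [|exact H].
  apply (continuity_1d_2d_pt_comp (fun z => z ^ k) (fun a b => b)). apply cpt_pow.
  apply continuity_2d_pt_id2.
Qed.

Lemma mass (k : nat) (Rr chi : R) (u0 : R -> R) (Tmax : Rbar) (u v : R -> R -> R) :
  0 < Rr -> Rbar_lt 0 Tmax ->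
  (forall r t, u (- r) t = u r t /\ v (- r) t = v r t) ->
  C21 Rr Tmax u -> C20 Rr Tmax v ->
  (forall r t, Qcl Rr Tmax (r, t) -> 0 < u r t /\ 0 < v r t) ->
  (forall r t, 0 < r < Rr -> 0 < t -> Rbar_lt t Tmax ->
     is_derive (fun s => s ^ k * flux chi u v s t) r (r ^ k * d_t u r t)) ->
  (forall t, 0 < t -> Rbar_lt t Tmax -> flux chi u v Rr t = 0) ->
  (forall r, - Rr <= r <= Rr -> u r 0 = u0 r) ->
  forall t, 0 < t -> Rbar_lt t Tmax ->
  RInt (fun s => s ^ k * u (cs Rr s) t) 0 Rr = RInt (fun s => s ^ k * u0 s) 0 Rr.
Proof.
  intros HR HT Hev [Hu1 [Hu2 [Hu3 [Hu4 [Hu5 Hu6]]]]] [Hv1 [Hv2 [Hv3 Hv4]]] Hpos Hfl Hbc Hinit.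
  assert (HR0 : 0 <= Rr) by lra.
  set (M := fun tau => RInt (fun s => s ^ k * u (cs Rr s) tau) 0 Rr).
  set (Mt := fun tau => RInt (fun s => s ^ k * u (cs Rr s) (Rmax 0 tau)) 0 Rr).
  assert (CU : forall a b : R, Rbar_lt a Tmax ->
     continuity_2d_pt (fun a b => b ^ k * u (cs Rr b) (Rmax 0 a)) a b).
  { intros a b Ha. apply cont2_powmul. apply (cont2_clamp Rr Tmax); auto. }
  assert (CUs : forall y : R, 0 <= y -> Rbar_lt y Tmax -> forall z,
     continuity_pt (fun b => b ^ k * u (cs Rr b) y) z).
  { intros y Hy Hy' z. pose proof (slice2 _ _ _ (CU y z Hy')) as H.
    cbv beta in H. rewrite (Rmax_right 0 y Hy) in H. exact H. }
  assert (EXI : forall y : R, 0 <= y -> Rbar_lt y Tmax ->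
     ex_RInt (fun s => s ^ k * u (cs Rr s) y) 0 Rr).
  { intros y Hy Hy'. apply (ex_RInt_continuous (V:=R_CompleteNormedModule)).
    intros z _. apply continuity_pt_filterlim. apply CUs; auto. }
  assert (D0 : forall y : R, 0 <= y -> Rbar_lt y Tmax -> d_r u 0 y = 0 /\ d_r v 0 y = 0).
  { intros y Hy Hy'. assert (Q : Qcl Rr Tmax (0, y)) by (repeat split; simpl; auto; lra).
    split; apply even_deriv0.
    - intros x; apply Hev.
    - apply (Hu1 0 y Q).
    - intros x; apply Hev.
    - apply (Hv1 0 y Q). }
  assert (DM : forall x : R, 0 < x -> Rbar_lt x Tmax -> is_derive M x 0).
  { intros x Hx HxT.
    assert (Hd : is_derive (fun tau => RInt (fun s => s ^ k * u (cs Rr s) tau) 0 Rr) x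
       (RInt (fun s => Derive (fun z => s ^ k * u (cs Rr s) z) x) 0 Rr)).
    { apply (is_derive_RInt_param (fun tau s => s ^ k * u (cs Rr s) tau)).
      - eapply filter_imp; [|apply (loc_pos_T x Tmax Hx HxT)].
        intros y [Hy Hy'] s Hs. apply ex_derive_scal. apply Hu5.
        unfold Qpos; simpl; repeat split; try apply cs_in; auto.
      - intros s Hs. eapply continuity_2d_pt_ext;
          [|apply (cont2_powmul k (fun a b => d_t u (cs Rr b) a));
            apply (cont2_pos Rr Tmax); auto].
        intros a b. simpl. rewrite Derive_scal. reflexivity.
      - eapply filter_imp; [|apply (loc_pos_T x Tmax Hx HxT)].
        intros y [Hy Hy']. apply EXI; auto; lra. }
    assert (E1 : RInt (fun s => Derive (fun z => s ^ k * u (cs Rr s) z) x) 0 Rr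
               = RInt (fun s => s ^ k * d_t u (cs Rr s) x) 0 Rr).
    { apply RInt_ext. intros s _. rewrite Derive_scal. reflexivity. }
    assert (E2 : (RInt (fun s => s ^ k * d_t u (cs Rr s) x) 0 Rr : R) = 0).
    { rewrite (ftc_open (fun s => s ^ k * flux chi u v (cs Rr s) x)); [| lra | | | ].
      - rewrite (cs_id Rr Rr) by lra. rewrite (cs_id Rr 0) by lra.
        rewrite Hbc by auto. destruct (D0 x) as [E3 E4]; try lra; auto.
        destruct k as [|j].
        + unfold flux. rewrite E3, E4. unfold Rdiv. ring.
        + simpl. ring.
      - intros s Hs. apply (is_derive_ext_loc (fun y => y ^ k * flux chi u v y x)).
        + eapply filter_imp; [|apply (loc_in Rr s); lra].
          intros y Hy. rewrite cs_id; [reflexivity|lra].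
        + rewrite cs_id by lra. apply Hfl; auto; lra.
      - intros s Hs.
        assert (Q : forall a b : R, Rbar_lt a Tmax -> Qcl Rr Tmax (cs Rr b, Rmax 0 a)).
        { intros a b Ha. unfold Qcl; simpl. split. apply cs_in; auto. split. apply Rmax_l.
          unfold Rmax; destruct Rle_dec; auto. }
        pose proof (cont_flux chi (fun a b => u (cs Rr b) (Rmax 0 a))
          (fun a b => d_r u (cs Rr b) (Rmax 0 a)) (fun a b => d_r v (cs Rr b) (Rmax 0 a)) x s
          (cont2_clamp Rr Tmax u x s HR0 HT HxT Hu2)
          (cont2_clamp Rr Tmax (d_r u) x s HR0 HT HxT Hu3)
          (cont2_clamp Rr Tmax (d_r v) x s HR0 HT HxT Hv3)
          (proj1 (Hpos _ _ (Q x s HxT)))) as H.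
        apply (cont2_powmul k) in H. apply slice2 in H. cbv beta in H.
        rewrite (Rmax_right 0 x) in H by lra. exact H.
      - intros s. pose proof (cont2_powmul k _ x s (cont2_pos Rr Tmax (d_t u) x s HR0 Hx HxT Hu6)) as H.
        apply slice2 in H. cbv beta in H. exact H. }
    unfold M. rewrite E1, E2 in Hd. exact Hd. }
  assert (LT : forall y t : R, y <= t -> Rbar_lt t Tmax -> Rbar_lt y Tmax).
  { intros y t Hy Ht. destruct Tmax; simpl in *; auto; lra. }
  assert (DMt : forall y : R, 0 < y -> Rbar_lt y Tmax -> is_derive Mt y 0).
  { intros y Hy HyT. apply (is_derive_ext_loc M).
    - eapply filter_imp; [|apply (loc_pos_T y Tmax Hy HyT)].
      intros z [Hz _]. unfold M, Mt. rewrite (Rmax_right 0 z) by lra. reflexivity.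
    - apply DM; auto. }
  assert (EXI' : forall y : R, Rbar_lt y Tmax ->
     ex_RInt (fun s => s ^ k * u (cs Rr s) (Rmax 0 y)) 0 Rr).
  { intros y Hy. apply (ex_RInt_continuous (V:=R_CompleteNormedModule)).
    intros z _. apply continuity_pt_filterlim.
    pose proof (slice2 _ _ _ (CU y z Hy)) as H. cbv beta in H. exact H. }
  assert (CM0 : continuity_pt Mt 0).
  { apply continuity_pt_locally. intros eps.
    assert (He : 0 < eps / (2 * Rr)) by (apply Rdiv_lt_0_compat; [apply cond_pos|lra]).
    destruct (uniform_continuity_2d_1d' (fun a b => b ^ k * u (cs Rr b) (Rmax 0 a)) 0 Rr 0
       (fun x _ => CU 0 x HT) (mkposreal _ He)) as [d Hd].
    destruct (rbar_nbhd 0 Tmax HT) as [d1 Hd1].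
    assert (Hp : 0 < Rmin d d1) by (apply Rmin_pos; apply cond_pos).
    exists (mkposreal _ Hp). intros y Hy. change (Rabs (y - 0) < Rmin d d1) in Hy.
    pose proof (Rmin_l d d1). pose proof (Rmin_r d d1).
    pose proof (Rle_abs (y - 0)). pose proof (Rle_abs (-(y - 0))). rewrite Rabs_Ropp in H2.
    assert (HyT : Rbar_lt y Tmax) by (apply Hd1; lra).
    assert (Ey : Mt y - Mt 0 = RInt (fun s => s ^ k * u (cs Rr s) (Rmax 0 y)
                 - s ^ k * u (cs Rr s) (Rmax 0 0)) 0 Rr).
    { unfold Mt. symmetry.
      exact (RInt_minus (V:=R_CompleteNormedModule) _ _ _ _ (EXI' y HyT) (EXI' 0 HT)). }
    rewrite Ey. eapply Rle_lt_trans.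
    - apply abs_RInt_le_const. lra.
      apply (ex_RInt_minus (V:=R_CompleteNormedModule)); [apply EXI'|apply EXI']; auto.
      intros s Hs. apply Rlt_le.
      apply (Hd s 0 s y); simpl; try lra. rewrite Rminus_diag, Rabs_R0. apply cond_pos.
    - simpl. assert (0 < eps) by apply cond_pos.
      replace ((Rr - 0) * (eps / (2 * Rr))) with (eps / 2) by (field; lra). lra. }
  intros t Ht HtT.
  destruct (MVT_gen Mt 0 t (fun _ => 0)) as [c [_ Hc]].
  - intros y Hy. rewrite Rmin_left in Hy by lra. rewrite Rmax_right in Hy by lra.
    apply DMt. lra. apply (LT y t); auto; lra.
  - intros y Hy. rewrite Rmin_left in Hy by lra. rewrite Rmax_right in Hy by lra.
    destruct (Req_dec y 0) as [->|Hy0]. exact CM0.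
    apply (cpt_of_derive _ _ 0). apply DMt. lra. apply (LT y t); auto; lra.
  - unfold Mt in Hc. rewrite (Rmax_right 0 t) in Hc by lra.
    rewrite (Rmax_right 0 0) in Hc by lra.
    assert (E : RInt (fun s => s ^ k * u (cs Rr s) 0) 0 Rr = RInt (fun s => s ^ k * u0 s) 0 Rr).
    { apply RInt_ext. intros s Hs. rewrite Rmin_left in Hs by lra.
      rewrite Rmax_right in Hs by lra. rewrite cs_id by lra. rewrite Hinit by lra. reflexivity. }
    rewrite <- E. simpl in Hc. lra.
Qed.

Lemma alg1 (N a r P mr mR mu w : R) : 0 < N -> 0 < a -> 0 < r -> 0 < P ->
  0 <= mr <= mR -> mu = N / P * mR -> a * w - mu / N * (r * a) = - mr ->
  - (mu * P / N) * / a <= w <= mu / N * r.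
Proof.
  intros HN Ha Hr HP Hm Hmu Hw.
  assert (E1 : mu * P / N = mR) by (rewrite Hmu; field; lra).
  assert (Hw' : a * w = mu / N * (r * a) - mr) by lra.
  assert (E2 : w = mu / N * r - mr / a).
  { replace w with ((a * w) / a) by (field; lra). rewrite Hw'. field; lra. }
  assert (Hmu0 : 0 <= mu / N * r).
  { rewrite Hmu. apply Rmult_le_pos; [|lra]. apply Rmult_le_pos.
    apply Rmult_le_pos; [|lra]. unfold Rdiv. apply Rmult_le_pos. lra. left; apply Rinv_0_lt_compat; lra.
    left; apply Rinv_0_lt_compat; lra. }
  rewrite E1, E2. split.
  - assert (mr / a <= mR / a) by (apply Rmult_le_compat_r; [left; apply Rinv_0_lt_compat; lra|lra]).
    unfold Rdiv in *. lra.
  - assert (0 <= mr / a) by (unfold Rdiv; apply Rmult_le_pos; [lra|left; apply Rinv_0_lt_compat; lra]).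
    lra.
Qed.

Lemma alg2 (kk a r P mr mR mu w U V K : R) : 0 <= kk -> 0 < a -> 0 < r -> 0 < P ->
  0 <= mr -> mr <= K * (r * a) / (kk + 1) -> 0 <= mR -> mR <= K * P / (kk + 1) ->
  mu = (kk + 1) / P * mR -> a * w - mu / (kk + 1) * (r * a) = - mr ->
  0 < U -> U <= K -> V = mu - U - kk / r * w ->
  Rabs w <= K * (r / (kk + 1)) /\ Rabs V <= K.
Proof.
  intros Hk Ha Hr HP Hm1 Hm2 HR1 HR2 Hmu Hw HU1 HU2 HV.
  set (N := kk + 1) in *.
  assert (HN : 0 < N) by (unfold N; lra).
  set (q := mr / (r * a)).
  assert (Hra : 0 < r * a) by nra.
  assert (Hq0 : 0 <= q) by (unfold q, Rdiv; apply Rmult_le_pos; [lra|left; apply Rinv_0_lt_compat; lra]).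
  assert (HqK : q <= K / N).
  { unfold q. apply (Rmult_le_reg_r (r * a)); [lra|].
    replace (mr / (r * a) * (r * a)) with mr by (field; lra).
    replace (K / N * (r * a)) with (K * (r * a) / N) by (field; lra). exact Hm2. }
  assert (Hmr : mr = q * (r * a)) by (unfold q; field; lra).
  assert (HmuK : mu <= K).
  { rewrite Hmu. apply (Rmult_le_reg_r (P / N)). apply Rdiv_lt_0_compat; lra.
    replace (N / P * mR * (P / N)) with mR by (field; lra).
    replace (K * (P / N)) with (K * P / N) by (field; lra). exact HR2. }
  assert (Hmu0 : 0 <= mu).
  { rewrite Hmu. apply Rmult_le_pos; [|lra]. apply Rlt_le, Rdiv_lt_0_compat; lra. }
  assert (Ew : w = r * (mu / N - q)).
  { apply (Rmult_eq_reg_l a); [|lra]. rewrite Hmr in Hw. nra. }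
  assert (HmuN : 0 <= mu / N <= K / N).
  { split. apply Rmult_le_pos; [lra|left; apply Rinv_0_lt_compat; lra].
    apply Rmult_le_compat_r; [left; apply Rinv_0_lt_compat; lra|lra]. }
  assert (EV : V = mu / N - U + kk * q).
  { rewrite HV, Ew. field_simplify; [|lra|lra].
    replace (mu) with (mu / N * N) at 1 by (field; lra). unfold N. field; lra. }
  assert (HKN : kk * (K / N) + K / N = K) by (unfold N; field; lra).
  split.
  - rewrite Ew. rewrite Rabs_mult, Rabs_pos_eq by lra.
    replace (K * (r / N)) with (r * (K / N)) by (field; lra).
    apply Rmult_le_compat_l; [lra|]. apply Rabs_le. lra.
  - rewrite EV. apply Rabs_le. split.
    + assert (0 <= kk * q) by (apply Rmult_le_pos; lra). lra.
    + assert (kk * q <= kk * (K / N)) by (apply Rmult_le_compat_l; lra). lra.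
Qed.

Theorem lemma2p5 (n : nat) (Rr chi : R) (u0 : R -> R) (Tmax : Rbar)
    (u v : R -> R -> R) :
  (1 <= n)%nat -> 0 < Rr -> 0 < chi ->
  (forall r, u0 (- r) = u0 r) ->
  C3_on Rr u0 ->
  (forall r, - Rr <= r <= Rr -> 0 < u0 r) ->
  Derive u0 Rr = 0 ->
  Rbar_lt 0 Tmax ->
  radial_classical_solution n Rr chi u0 Tmax u v ->
  forall t r, 0 < t -> Rbar_lt t Tmax -> 0 < r < Rr ->
    let mu := mean_radial n Rr u0 in
    - (mu * Rr ^ n / INR n) * / r ^ (n - 1) <= d_r v r t <= mu / INR n * r /\
    Rbar_le (Rabs (d_r v r t))
            (Rbar_mult (Linf_norm Rr (fun s => u s t)) (r / INR n)) /\
    Rbar_le (Rabs (d_r (d_r v) r t)) (Linf_norm Rr (fun s => u s t)).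
Proof.
  intros Hn HR Hchi Hu0ev HC3 Hu0pos HNeu HT Hsol t r Ht HtT Hr mu.
  destruct n as [|k]; [lia|].
  assert (Ek : (S k - 1)%nat = k) by lia.
  destruct Hsol as [Hev [HC21 [HC20 [Hpos [Hfl [Hveq [Hbc Hinit]]]]]]].
  rewrite Ek in *.
  fold mu in Hveq.
  assert (HR0 : 0 <= Rr) by lra.
  pose proof HC21 as [Hu1 [Hu2 _]]. pose proof HC20 as [Hv1 _].
  assert (HM := mass k Rr chi u0 Tmax u v HR HT Hev HC21 HC20 Hpos Hfl Hbc Hinit t Ht HtT).
  set (phi := fun s => s ^ k * u (cs Rr s) t).
  assert (Cphi : forall z, continuity_pt phi z).
  { intros z. pose proof (slice2 _ _ _ (cont2_powmul k _ t z (cont2_clamp Rr Tmax u t z HR0 HT HtT Hu2))) as H.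
    cbv beta in H. rewrite (Rmax_right 0 t) in H by lra. exact H. }
  assert (EXphi : forall a b, ex_RInt phi a b).
  { intros a b. apply (ex_RInt_continuous (V:=R_CompleteNormedModule)).
    intros z _. apply continuity_pt_filterlim. apply Cphi. }
  assert (Phi0 : forall s, 0 < s < Rr -> 0 < phi s).
  { intros s Hs. unfold phi. apply Rmult_lt_0_compat. apply pow_lt; lra.
    apply Hpos. unfold Qcl; simpl. split. apply cs_in; auto. split; [lra|auto]. }
  set (mr := RInt phi 0 r). set (mR := RInt phi 0 Rr).
  assert (Hmr0 : 0 <= mr).
  { apply RInt_ge_0. lra. apply EXphi. intros s Hs. left; apply Phi0; lra. }
  assert (HmrR : mr <= mR).
  { unfold mR. rewrite <- (RInt_Chasles phi 0 r Rr) by apply EXphi.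
    assert (0 <= RInt phi r Rr).
    { apply RInt_ge_0. lra. apply EXphi. intros s Hs. left; apply Phi0; lra. }
    unfold plus; simpl. unfold mr. lra. }
  assert (Hmu : mu = INR (S k) / Rr ^ S k * mR).
  { unfold mu, mean_radial. rewrite Ek. unfold mR, phi. rewrite HM. reflexivity. }
  assert (Dv0 : d_r v 0 t = 0).
  { apply even_deriv0. intros x; apply Hev. apply (Hv1 0 t). repeat split; simpl; auto; lra. }
  assert (HWd : forall s, - Rr <= s <= Rr ->
     is_derive (fun s => d_r v s t) s (d_r (d_r v) s t)).
  { intros s Hs. apply Derive_correct. apply (Hv1 s t). repeat split; simpl; auto; lra. }
  assert (HN : 0 < INR (S k)) by (apply lt_0_INR; lia).
  assert (Key : r ^ k * d_r v r t - mu / INR (S k) * r ^ S k = - mr).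
  { unfold mr. rewrite <- (RInt_opp (V:=R_CompleteNormedModule)) by apply EXphi.
    symmetry.
    rewrite (ftc_open (fun s => s ^ k * d_r v s t - mu / INR (S k) * s ^ S k)); [| lra | | | ].
    - destruct k as [|j].
      + simpl. rewrite Dv0. ring.
      + simpl. ring.
    - intros s Hs.
      pose proof (is_derive_mult (K:=R_AbsRing) (fun s => s ^ k) (fun s => d_r v s t) s _ _
        (is_derive_pow (fun y => y) k s 1 (is_derive_id s)) (HWd s ltac:(lra)) Rmult_comm) as H1.
      pose proof (is_derive_scal (fun y => y ^ S k) s (mu / INR (S k)) _
        (is_derive_pow (fun y => y) (S k) s 1 (is_derive_id s))) as H2.
      pose proof (is_derive_minus _ _ s _ _ H1 H2) as H3.
      cbv beta in H3.
      refine (eq_ind _ (fun l => is_derive _ s l) H3 _ _).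
      + unfold minus, plus, opp, mult; simpl.
        pose proof (Hveq s t ltac:(lra) Ht HtT) as E.
        unfold phi. rewrite cs_id by lra.
        destruct k as [|j].
        * simpl in *. unfold Rdiv in *. rewrite Rinv_1 in *. lra.
        * simpl pred. rewrite S_INR in *. simpl pow.
          assert (Hs0 : s <> 0) by lra.
          assert (E' : d_r (d_r v) s t = mu - u s t - (INR j + 1) / s * d_r v s t) by lra.
          rewrite E'. field. split; [|auto]. pose proof (pos_INR j); lra.
    - intros s Hs. apply continuity_pt_minus.
      + apply (continuity_pt_mult (fun y => y ^ k) (fun y => d_r v y t)). apply cpt_pow.
        apply (cpt_of_derive _ _ _ (HWd s ltac:(lra))).
      + apply (continuity_pt_mult (fun _ => mu / INR (S k)) (fun y => y ^ S k)).
        apply continuity_pt_const. intros a b; reflexivity. apply cpt_pow.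
    - intros s. apply (continuity_pt_opp phi). apply Cphi. }
  change (r ^ S k) with (r * r ^ k) in Key.
  assert (Hrk : 0 < r ^ k) by (apply pow_lt; lra).
  assert (HP : 0 < Rr ^ S k) by (apply pow_lt; lra).
  split.
  { apply (alg1 (INR (S k)) (r ^ k) r (Rr ^ S k) mr mR mu); auto. exact (proj1 Hr). }
  assert (UB : forall s, 0 < s < Rr -> Rbar_le (Rabs (u s t)) (Linf_norm Rr (fun s => u s t))).
  { intros s Hs. unfold Linf_norm. apply (proj1 (Lub_Rbar_correct _)). exists s. split; auto. }
  generalize UB. destruct (Linf_norm Rr (fun s => u s t)) as [K| |]; intros UB'.
  - cbn [Rbar_le Rbar_mult Rbar_mult'].
    assert (UK : forall s, 0 < s < Rr -> u s t <= K).
    { intros s Hs. specialize (UB' s Hs). simpl in UB'. pose proof (Rle_abs (u s t)). lra. }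
    assert (IntK : forall rho, 0 < rho -> (RInt (fun s => K * s ^ k) 0 rho : R) = K * rho ^ S k / INR (S k)).
    { intros rho Hrho.
      rewrite (ftc_open (fun s => K / INR (S k) * s ^ S k)); [| lra | | | ].
      - rewrite pow_i by lia. field. lra.
      - intros s Hs.
        pose proof (is_derive_scal (fun y => y ^ S k) s (K / INR (S k)) _
          (is_derive_pow (fun y => y) (S k) s 1 (is_derive_id s))) as H2.
        replace (K * s ^ k) with (K / INR (S k) * (INR (S k) * 1 * s ^ Init.Nat.pred (S k))).
        exact H2. simpl pred. field. lra.
      - intros s _. apply (continuity_pt_mult (fun _ => K / INR (S k)) (fun y => y ^ S k)).
        apply continuity_pt_const. intros a b; reflexivity. apply cpt_pow.
      - intros s. apply (continuity_pt_mult (fun _ => K) (fun y => y ^ k)).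
        apply continuity_pt_const. intros a b; reflexivity. apply cpt_pow. }
    assert (EXK : forall rho, ex_RInt (fun s => K * s ^ k) 0 rho).
    { intros rho. apply (ex_RInt_continuous (V:=R_CompleteNormedModule)).
      intros z _. apply continuity_pt_filterlim.
      apply (continuity_pt_mult (fun _ => K) (fun y => y ^ k)).
      apply continuity_pt_const. intros a b; reflexivity. apply cpt_pow. }
    assert (BK : forall rho, 0 < rho <= Rr -> RInt phi 0 rho <= K * rho ^ S k / INR (S k)).
    { intros rho Hrho. rewrite <- IntK by lra. apply RInt_le. lra. apply EXphi. apply EXK.
      intros s Hs. unfold phi. rewrite cs_id by lra. rewrite Rmult_comm.
      apply Rmult_le_compat_r. left; apply pow_lt; lra. apply UK; lra. }
    assert (Hmr1 : mr <= K * (r * r ^ k) / (INR k + 1)).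
    { rewrite <- S_INR. apply BK. lra. }
    assert (HmR1 : mR <= K * Rr ^ S k / (INR k + 1)).
    { rewrite <- S_INR. apply BK. lra. }
    assert (HU : 0 < u r t).
    { apply Hpos. unfold Qcl; simpl. split. lra. split; [lra|auto]. }
    assert (HUK : u r t <= K) by (apply UK; lra).
    pose proof (Hveq r t Hr Ht HtT) as EV.
    rewrite S_INR in Hmu, Key |- *.
    apply (alg2 (INR k) (r ^ k) r (Rr ^ S k) mr mR mu (d_r v r t) (u r t) (d_r (d_r v) r t) K).
    all: try assumption.
    apply pos_INR. exact (proj1 Hr). lra. lra.
  - split; [|simpl; auto].
    assert (Hp : 0 < r / INR (S k)) by (apply Rdiv_lt_0_compat; lra).
    unfold Rbar_mult, Rbar_mult'. destruct (Rle_dec 0 (r / INR (S k))) as [H|H]; [|lra].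
    destruct (Rle_lt_or_eq_dec 0 (r / INR (S k)) H); simpl; auto. lra.
  - exfalso. specialize (UB' r Hr). simpl in UB'. exact UB'.
Qed.
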